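(* Let $(M^7,\varphi)$ be a manifold with a $\mathrm{G}_2$-structure and $\zeta=(1,0)$ the associated unit spinor. Then for every vector field $X$, $(X\lrcorner\varphi)\cdot\zeta=3X\cdot\zeta$; and for every $\gamma\in\Omega^3_{27}$, written as $\gamma_{ijk}=h_{ip}\varphi_{pjk}+h_{jp}\varphi_{ipk}+h_{kp}\varphi_{ijp}$ for a traceless symmetric 2-tensor $h$, one has $(X\lrcorner\gamma)\cdot\zeta=2h(X)\cdot\zeta$ and $(X\lrcorner\ast\gamma)\cdot\zeta=-2h(X)\cdot\zeta$.
   Context: The spinor bundle is identified with $\underline{\mathbb{R}}\oplus TM$, $\zeta=(1,0)$, with Clifford multiplication of a vector $Y$ on a spinor $(f,Z)$ given by $Y\cdot(f,Z)=(-\langle Y,Z\rangle,\,fY+Y\times Z)$, where $Y\times Z=(\varphi(Y,Z,\cdot))^\sharp$ (using the metric induced by $\varphi$). For a $k$-form $\epsilon$ and local orthonormal frame $e_i$, $\epsilon\cdot(f,Z)=\frac1{k!}\epsilon_{i_1\dots i_k}e_{i_1}\cdot(e_{i_2}\cdot(\cdots(e_{i_k}\cdot(f,Z))\cdots))$. $\Omega^3_{27}$ is the 27-dimensional irreducible $\mathrm{G}_2$-summand of 3-forms, whose elements are exactly those of the form above with $h$ traceless symmetric; indices are in an orthonormal frame, repeated indices summed; $\ast$ is the Hodge star of the induced metric and orientation. *)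

(* Defs.v *)
(* Pointwise (single tangent space) model of a G2-structure. *)
From HB Require Import structures.
From mathcomp Require Import all_boot all_order all_algebra.
Set Implicit Arguments. Unset Strict Implicit. Unset Printing Implicit Defensive.
Import Order.TTheory GRing.Theory Num.Theory.
Local Open Scope ring_scope.

Section G2.
Variable R : realFieldType.

(* Vectors of T_pM in an orthonormal frame e_1..e_7 (indices 0..6). *)
Definition vec := 'I_7 -> R.
(* Spinors: sections of R (+) TM, written (f, Z). *)
Definition spinor := (R * vec)%type.

Definition ebasis (i : 'I_7) : vec := fun j => (i == j)%:R.

Definition delta3 (i j k a b c : 'I_7) : R :=
  \det (\matrix_(r < 3, s < 3)
          ((tnth [tuple i; j; k] r == tnth [tuple a; b; c] s)%:R : R)).

Definition eps7 (a b c d e f g : 'I_7) : R :=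
  \det (\matrix_(r < 7, s < 7)
          ((tnth [tuple a; b; c; d; e; f; g] r == s)%:R : R)).

Definition o (n : nat) : 'I_7 := inord n.

(* Standard G2 3-form
   phi = e123 + e145 + e167 + e246 - e257 - e347 - e356
   (1-based indices), components phi_{ijk} in the orthonormal frame. *)
Definition phi (i j k : 'I_7) : R :=
    delta3 i j k (o 0) (o 1) (o 2) + delta3 i j k (o 0) (o 3) (o 4)
  + delta3 i j k (o 0) (o 5) (o 6) + delta3 i j k (o 1) (o 3) (o 5)
  - delta3 i j k (o 1) (o 4) (o 6) - delta3 i j k (o 2) (o 3) (o 6)
  - delta3 i j k (o 2) (o 4) (o 5).

Definition inner (Y Z : vec) : R := \sum_i Y i * Z i.

Definition cross (Y Z : vec) : vec :=
  fun l => \sum_i \sum_j phi i j l * Y i * Z j.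

Definition cliff (Y : vec) (s : spinor) : spinor :=
  (- inner Y s.2, fun l => s.1 * Y l + cross Y s.2 l).

Definition sp_add (s t : spinor) : spinor := (s.1 + t.1, fun l => s.2 l + t.2 l).
Definition sp_scale (c : R) (s : spinor) : spinor := (c * s.1, fun l => c * s.2 l).
Definition sp_zero : spinor := (0, fun _ => 0).
Definition sp_sum (I : finType) (F : I -> spinor) : spinor :=
  \big[sp_add/sp_zero]_(i : I) F i.

Definition cliff2 (eps : 'I_7 -> 'I_7 -> R) (s : spinor) : spinor :=
  sp_sum (fun i : 'I_7 => sp_sum (fun j : 'I_7 =>
    sp_scale (eps i j / 2%:R) (cliff (ebasis i) (cliff (ebasis j) s)))).

Definition cliff3 (eps : 'I_7 -> 'I_7 -> 'I_7 -> R) (s : spinor) : spinor :=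
  sp_sum (fun i : 'I_7 => sp_sum (fun j : 'I_7 => sp_sum (fun k : 'I_7 =>
    sp_scale (eps i j k / 6%:R)
      (cliff (ebasis i) (cliff (ebasis j) (cliff (ebasis k) s)))))).

Definition zeta : spinor := (1, fun _ => 0).

(* Hodge star of a 3-form (orientation e_1 ^ ... ^ e_7, induced by phi) *)
Definition hodge3 (g : 'I_7 -> 'I_7 -> 'I_7 -> R) (i j k l : 'I_7) : R :=
  (\sum_a \sum_b \sum_c g a b c * eps7 a b c i j k l) / 6%:R.

Definition contr3 (X : vec) (g : 'I_7 -> 'I_7 -> 'I_7 -> R) : 'I_7 -> 'I_7 -> R :=
  fun j k => \sum_i X i * g i j k.
Definition contr4 (X : vec) (g : 'I_7 -> 'I_7 -> 'I_7 -> 'I_7 -> R)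
  : 'I_7 -> 'I_7 -> 'I_7 -> R :=
  fun j k l => \sum_i X i * g i j k l.

Definition gamma_of (h : 'I_7 -> 'I_7 -> R) (i j k : 'I_7) : R :=
  \sum_p (h i p * phi p j k + h j p * phi i p k + h k p * phi i j p).

Definition happ (h : 'I_7 -> 'I_7 -> R) (X : vec) : vec :=
  fun i => \sum_j h i j * X j.

Definition symmetric2 (h : 'I_7 -> 'I_7 -> R) := forall i j, h i j = h j i.
Definition traceless2 (h : 'I_7 -> 'I_7 -> R) := \sum_i h i i = 0.

End G2.

(* Main.v *)
Require Import Defs.
From HB Require Import structures.
From mathcomp Require Import all_boot all_order all_algebra ring.
From mathcomp Require Import ssrZ.
From Stdlib Require Import BinNums.
From Stdlib Require Import BinInt.
Delimit Scope nat_scope with N.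
From Stdlib Require Import FunctionalExtensionality.
Import GRing.Theory Num.Theory.
Local Open Scope ring_scope.

Fixpoint epsF (n : nat) (s : seq nat) : int :=
  match n, s with
  | n'.+1, x :: s' => if x \in s' then 0 else (-1) ^+ x * epsF n' (map (unbump x) s')
  | _, _ => 1
  end.
Definition epsZ s := epsF (size s) s.

Fixpoint epsFZ (n : nat) (s : seq nat) : Z :=
  match n, s with
  | n'.+1, x :: s' => if x \in s' then Z0 else Z.mul (if odd x then Zneg 1 else Zpos 1) (epsFZ n' (map (unbump x) s'))
  | _, _ => Zpos 1
  end.
Definition epsZZ s := epsFZ (size s) s.

Lemma epsFE n s : epsF n s = int_of_Z (epsFZ n s).
Proof.
elim: n s => [|n IH] [|x s] //=; case: ifP => // _.
rewrite IH (rmorphM int_of_Z) -signr_odd; congr (_ * _).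
by case: (odd x).
Qed.

Lemma det_sel (R : comNzRingType) n (t : 'I_n -> 'I_n) :
  \det (\matrix_(r, s) ((t r == s)%:R : R)) = (epsZ [seq val (t r) | r <- enum 'I_n])%:~R.
Proof.
elim: n t => [|n IH] t; first by rewrite det_mx00 enum_ord0.
rewrite (expand_det_row _ ord0) (bigD1 (t ord0)) //= big1 ?addr0; last first.
  by move=> j /negbTE nj; rewrite mxE eq_sym nj mul0r.
rewrite mxE eqxx mul1r /cofactor add0n /epsZ enum_ordSl /=.
rewrite -map_comp.
case: ifP => [/mapP [r _ /= /val_inj Er] | /negbT Nin].
  rewrite rmorph0 (expand_det_row _ r) big1 ?mulr0 // => j _.
  by rewrite !mxE -Er (negbTE (neq_lift _ _)) mul0r.
pose t' := fun r : 'I_n => odflt r (unlift (t ord0) (t (lift ord0 r))).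
have Ht' r : t (lift ord0 r) = lift (t ord0) (t' r).
  rewrite /t'; case: unliftP => //= Ee.
  by case/negP: Nin; apply/mapP; exists r; rewrite ?mem_enum //= Ee.
have -> : row' ord0 (col' (t ord0) (\matrix_(r, s) ((t r == s)%:R : R)))
          = \matrix_(r, s) ((t' r == s)%:R : R).
  by apply/matrixP => r s; rewrite !mxE Ht' (inj_eq (@lift_inj _ _)).
rewrite IH /epsZ size_map size_enum_ord rmorphM rmorphXn rmorphN1; congr (_ * _%:~R).
rewrite size_map size_enum_ord -map_comp; congr epsF; apply: eq_map => r /=.
by rewrite Ht' /= bumpK.
Qed.



Definition bz (x y : nat) : Z := if x == y then Zpos 1 else Z0.
Definition d3N (i j k a b c : nat) : Z :=
  Z.add (Z.sub (Z.mul (bz i a) (Z.sub (Z.mul (bz j b) (bz k c)) (Z.mul (bz j c) (bz k b))))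
  (Z.mul (bz i b) (Z.sub (Z.mul (bz j a) (bz k c)) (Z.mul (bz j c) (bz k a)))))
  (Z.mul (bz i c) (Z.sub (Z.mul (bz j a) (bz k b)) (Z.mul (bz j b) (bz k a)))).

Definition phiN (i j k : nat) : Z :=
  Z.sub (Z.sub (Z.sub (Z.add (Z.add (Z.add (d3N i j k 0 1 2) (d3N i j k 0 3 4)) (d3N i j k 0 5 6)) (d3N i j k 1 3 5))
  (d3N i j k 1 4 6)) (d3N i j k 2 3 6)) (d3N i j k 2 4 5).

Lemma vo n : (n < 7)%N -> (o n : nat) = n.
Proof. by move=> h; rewrite /o inordK. Qed.

Definition phiT (x0 x1 x2 : nat) : Z :=
  match x0, x1, x2 with
  | 0, 1, 2 => Zpos 1
  | 0, 2, 1 => Zneg 1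
  | 0, 3, 4 => Zpos 1
  | 0, 4, 3 => Zneg 1
  | 0, 5, 6 => Zpos 1
  | 0, 6, 5 => Zneg 1
  | 1, 0, 2 => Zneg 1
  | 1, 2, 0 => Zpos 1
  | 1, 3, 5 => Zpos 1
  | 1, 4, 6 => Zneg 1
  | 1, 5, 3 => Zneg 1
  | 1, 6, 4 => Zpos 1
  | 2, 0, 1 => Zpos 1
  | 2, 1, 0 => Zneg 1
  | 2, 3, 6 => Zneg 1
  | 2, 4, 5 => Zneg 1
  | 2, 5, 4 => Zpos 1
  | 2, 6, 3 => Zpos 1
  | 3, 0, 4 => Zneg 1
  | 3, 1, 5 => Zneg 1
  | 3, 2, 6 => Zpos 1
  | 3, 4, 0 => Zpos 1
  | 3, 5, 1 => Zpos 1
  | 3, 6, 2 => Zneg 1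
  | 4, 0, 3 => Zpos 1
  | 4, 1, 6 => Zpos 1
  | 4, 2, 5 => Zpos 1
  | 4, 3, 0 => Zneg 1
  | 4, 5, 2 => Zneg 1
  | 4, 6, 1 => Zneg 1
  | 5, 0, 6 => Zneg 1
  | 5, 1, 3 => Zpos 1
  | 5, 2, 4 => Zneg 1
  | 5, 3, 1 => Zneg 1
  | 5, 4, 2 => Zpos 1
  | 5, 6, 0 => Zpos 1
  | 6, 0, 5 => Zpos 1
  | 6, 1, 4 => Zneg 1
  | 6, 2, 3 => Zneg 1
  | 6, 3, 2 => Zpos 1
  | 6, 4, 1 => Zpos 1
  | 6, 5, 0 => Zneg 1
  | _, _, _ => Z0
  end.

Definition psiT (x0 x1 x2 x3 : nat) : Z :=
  match x0, x1, x2, x3 with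
  | 0, 1, 3, 6 => Zneg 1
  | 0, 1, 4, 5 => Zneg 1
  | 0, 1, 5, 4 => Zpos 1
  | 0, 1, 6, 3 => Zpos 1
  | 0, 2, 3, 5 => Zneg 1
  | 0, 2, 4, 6 => Zpos 1
  | 0, 2, 5, 3 => Zpos 1
  | 0, 2, 6, 4 => Zneg 1
  | 0, 3, 1, 6 => Zpos 1
  | 0, 3, 2, 5 => Zpos 1
  | 0, 3, 5, 2 => Zneg 1
  | 0, 3, 6, 1 => Zneg 1
  | 0, 4, 1, 5 => Zpos 1
  | 0, 4, 2, 6 => Zneg 1
  | 0, 4, 5, 1 => Zneg 1
  | 0, 4, 6, 2 => Zpos 1
  | 0, 5, 1, 4 => Zneg 1
  | 0, 5, 2, 3 => Zneg 1
  | 0, 5, 3, 2 => Zpos 1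
  | 0, 5, 4, 1 => Zpos 1
  | 0, 6, 1, 3 => Zneg 1
  | 0, 6, 2, 4 => Zpos 1
  | 0, 6, 3, 1 => Zpos 1
  | 0, 6, 4, 2 => Zneg 1
  | 1, 0, 3, 6 => Zpos 1
  | 1, 0, 4, 5 => Zpos 1
  | 1, 0, 5, 4 => Zneg 1
  | 1, 0, 6, 3 => Zneg 1
  | 1, 2, 3, 4 => Zpos 1
  | 1, 2, 4, 3 => Zneg 1
  | 1, 2, 5, 6 => Zpos 1
  | 1, 2, 6, 5 => Zneg 1
  | 1, 3, 0, 6 => Zneg 1
  | 1, 3, 2, 4 => Zneg 1
  | 1, 3, 4, 2 => Zpos 1
  | 1, 3, 6, 0 => Zpos 1
  | 1, 4, 0, 5 => Zneg 1
  | 1, 4, 2, 3 => Zpos 1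
  | 1, 4, 3, 2 => Zneg 1
  | 1, 4, 5, 0 => Zpos 1
  | 1, 5, 0, 4 => Zpos 1
  | 1, 5, 2, 6 => Zneg 1
  | 1, 5, 4, 0 => Zneg 1
  | 1, 5, 6, 2 => Zpos 1
  | 1, 6, 0, 3 => Zpos 1
  | 1, 6, 2, 5 => Zpos 1
  | 1, 6, 3, 0 => Zneg 1
  | 1, 6, 5, 2 => Zneg 1
  | 2, 0, 3, 5 => Zpos 1
  | 2, 0, 4, 6 => Zneg 1
  | 2, 0, 5, 3 => Zneg 1
  | 2, 0, 6, 4 => Zpos 1
  | 2, 1, 3, 4 => Zneg 1
  | 2, 1, 4, 3 => Zpos 1
  | 2, 1, 5, 6 => Zneg 1
  | 2, 1, 6, 5 => Zpos 1
  | 2, 3, 0, 5 => Zneg 1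
  | 2, 3, 1, 4 => Zpos 1
  | 2, 3, 4, 1 => Zneg 1
  | 2, 3, 5, 0 => Zpos 1
  | 2, 4, 0, 6 => Zpos 1
  | 2, 4, 1, 3 => Zneg 1
  | 2, 4, 3, 1 => Zpos 1
  | 2, 4, 6, 0 => Zneg 1
  | 2, 5, 0, 3 => Zpos 1
  | 2, 5, 1, 6 => Zpos 1
  | 2, 5, 3, 0 => Zneg 1
  | 2, 5, 6, 1 => Zneg 1
  | 2, 6, 0, 4 => Zneg 1
  | 2, 6, 1, 5 => Zneg 1
  | 2, 6, 4, 0 => Zpos 1
  | 2, 6, 5, 1 => Zpos 1
  | 3, 0, 1, 6 => Zneg 1
  | 3, 0, 2, 5 => Zneg 1
  | 3, 0, 5, 2 => Zpos 1
  | 3, 0, 6, 1 => Zpos 1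
  | 3, 1, 0, 6 => Zpos 1
  | 3, 1, 2, 4 => Zpos 1
  | 3, 1, 4, 2 => Zneg 1
  | 3, 1, 6, 0 => Zneg 1
  | 3, 2, 0, 5 => Zpos 1
  | 3, 2, 1, 4 => Zneg 1
  | 3, 2, 4, 1 => Zpos 1
  | 3, 2, 5, 0 => Zneg 1
  | 3, 4, 1, 2 => Zpos 1
  | 3, 4, 2, 1 => Zneg 1
  | 3, 4, 5, 6 => Zpos 1
  | 3, 4, 6, 5 => Zneg 1
  | 3, 5, 0, 2 => Zneg 1
  | 3, 5, 2, 0 => Zpos 1
  | 3, 5, 4, 6 => Zneg 1
  | 3, 5, 6, 4 => Zpos 1
  | 3, 6, 0, 1 => Zneg 1
  | 3, 6, 1, 0 => Zpos 1
  | 3, 6, 4, 5 => Zpos 1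
  | 3, 6, 5, 4 => Zneg 1
  | 4, 0, 1, 5 => Zneg 1
  | 4, 0, 2, 6 => Zpos 1
  | 4, 0, 5, 1 => Zpos 1
  | 4, 0, 6, 2 => Zneg 1
  | 4, 1, 0, 5 => Zpos 1
  | 4, 1, 2, 3 => Zneg 1
  | 4, 1, 3, 2 => Zpos 1
  | 4, 1, 5, 0 => Zneg 1
  | 4, 2, 0, 6 => Zneg 1
  | 4, 2, 1, 3 => Zpos 1
  | 4, 2, 3, 1 => Zneg 1
  | 4, 2, 6, 0 => Zpos 1
  | 4, 3, 1, 2 => Zneg 1
  | 4, 3, 2, 1 => Zpos 1
  | 4, 3, 5, 6 => Zneg 1
  | 4, 3, 6, 5 => Zpos 1
  | 4, 5, 0, 1 => Zneg 1
  | 4, 5, 1, 0 => Zpos 1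
  | 4, 5, 3, 6 => Zpos 1
  | 4, 5, 6, 3 => Zneg 1
  | 4, 6, 0, 2 => Zpos 1
  | 4, 6, 2, 0 => Zneg 1
  | 4, 6, 3, 5 => Zneg 1
  | 4, 6, 5, 3 => Zpos 1
  | 5, 0, 1, 4 => Zpos 1
  | 5, 0, 2, 3 => Zpos 1
  | 5, 0, 3, 2 => Zneg 1
  | 5, 0, 4, 1 => Zneg 1
  | 5, 1, 0, 4 => Zneg 1
  | 5, 1, 2, 6 => Zpos 1
  | 5, 1, 4, 0 => Zpos 1
  | 5, 1, 6, 2 => Zneg 1
  | 5, 2, 0, 3 => Zneg 1
  | 5, 2, 1, 6 => Zneg 1
  | 5, 2, 3, 0 => Zpos 1
  | 5, 2, 6, 1 => Zpos 1
  | 5, 3, 0, 2 => Zpos 1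
  | 5, 3, 2, 0 => Zneg 1
  | 5, 3, 4, 6 => Zpos 1
  | 5, 3, 6, 4 => Zneg 1
  | 5, 4, 0, 1 => Zpos 1
  | 5, 4, 1, 0 => Zneg 1
  | 5, 4, 3, 6 => Zneg 1
  | 5, 4, 6, 3 => Zpos 1
  | 5, 6, 1, 2 => Zpos 1
  | 5, 6, 2, 1 => Zneg 1
  | 5, 6, 3, 4 => Zpos 1
  | 5, 6, 4, 3 => Zneg 1
  | 6, 0, 1, 3 => Zpos 1
  | 6, 0, 2, 4 => Zneg 1
  | 6, 0, 3, 1 => Zneg 1
  | 6, 0, 4, 2 => Zpos 1
  | 6, 1, 0, 3 => Zneg 1
  | 6, 1, 2, 5 => Zneg 1
  | 6, 1, 3, 0 => Zpos 1
  | 6, 1, 5, 2 => Zpos 1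
  | 6, 2, 0, 4 => Zpos 1
  | 6, 2, 1, 5 => Zpos 1
  | 6, 2, 4, 0 => Zneg 1
  | 6, 2, 5, 1 => Zneg 1
  | 6, 3, 0, 1 => Zpos 1
  | 6, 3, 1, 0 => Zneg 1
  | 6, 3, 4, 5 => Zneg 1
  | 6, 3, 5, 4 => Zpos 1
  | 6, 4, 0, 2 => Zneg 1
  | 6, 4, 2, 0 => Zpos 1
  | 6, 4, 3, 5 => Zpos 1
  | 6, 4, 5, 3 => Zneg 1
  | 6, 5, 1, 2 => Zneg 1
  | 6, 5, 2, 1 => Zpos 1
  | 6, 5, 3, 4 => Zneg 1
  | 6, 5, 4, 3 => Zpos 1
  | _, _, _, _ => Z0
  end.

Definition ord7 : seq 'I_7 := [:: @Ordinal 7 0 (erefl true); @Ordinal 7 1 (erefl true); @Ordinal 7 2 (erefl true);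
  @Ordinal 7 3 (erefl true); @Ordinal 7 4 (erefl true); @Ordinal 7 5 (erefl true); @Ordinal 7 6 (erefl true)].
Definition s7o (F : 'I_7 -> Z) : Z := foldr (fun i a => Z.add (F i) a) Z0 ord7.
Lemma ord7P (i : 'I_7) : i \in ord7.
Proof.
rewrite -(mem_map val_inj) /=.
by case: i => [[|[|[|[|[|[|[|n]]]]]]] Hi].
Qed.
Lemma all7 (P : pred 'I_7) : all P ord7 -> forall i, P i.
Proof. by move=> /allP H i; apply: H; apply: ord7P. Qed.

Lemma all7_2 (P : 'I_7 -> 'I_7 -> bool) :
  all (fun i => all (fun j => P i j) ord7) ord7 -> forall i j, P i j.
Proof. by move=> H i; apply: all7; move: i; apply: all7. Qed.
Lemma all7_3 (P : 'I_7 -> 'I_7 -> 'I_7 -> bool) :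
  all (fun i => all (fun j => all (fun k => P i j k) ord7) ord7) ord7 -> forall i j k, P i j k.
Proof. by move=> H i j; apply: all7; move: i j; apply: all7_2. Qed.
Lemma all7_4 (P : 'I_7 -> 'I_7 -> 'I_7 -> 'I_7 -> bool) :
  all (fun i => all (fun j => all (fun k => all (fun l => P i j k l) ord7) ord7) ord7) ord7 ->
  forall i j k l, P i j k l.
Proof. by move=> H i j k; apply: all7; move: i j k; apply: all7_3. Qed.
Lemma all7_5 (P : 'I_7 -> 'I_7 -> 'I_7 -> 'I_7 -> 'I_7 -> bool) :
  all (fun i => all (fun j => all (fun k => all (fun l => all (fun m => P i j k l m) ord7) ord7) ord7) ord7) ord7 ->
  forall i j k l m, P i j k l m.
Proof. by move=> H i j k l; apply: all7; move: i j k l; apply: all7_4. Qed.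

Lemma eqbP (x y : Z) : Z.eqb x y -> x = y.
Proof. by move/Z.eqb_eq. Qed.

Lemma C_phi (i j k : 'I_7) : phiN i j k = phiT i j k.
Proof. by apply: eqbP; move: i j k; apply: all7_3; vm_cast_no_check (erefl true). Qed.

Definition YT (i j k l : nat) : Z :=
  Z.add (Z.opp (Z.mul (bz k j) (bz i l))) (s7o (fun b => Z.mul (phiT i b l) (phiT j k b))).

Definition eps7l (a b c p i j k : nat) : Z := epsZZ [:: a; b; c; p; i; j; k].

Lemma Cl1a (p : 'I_7) : s7o (fun i => s7o (fun j => Z.mul (phiT p i j) (Z.opp (bz j i)))) = Z0.
Proof. by apply: eqbP; move: p; apply: all7; vm_cast_no_check (erefl true). Qed.
Lemma Cl1b (p l : 'I_7) : s7o (fun i => s7o (fun j => Z.mul (phiT p i j) (phiT i j l))) = Z.mul (Zpos 6) (bz p l).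
Proof. by apply: eqbP; move: p l; apply: all7_2; vm_cast_no_check (erefl true). Qed.

Definition GT (i j k m q : nat) : Z :=
  Z.add (Z.add (Z.mul (bz i m) (phiT q j k)) (Z.mul (bz j m) (phiT i q k))) (Z.mul (bz k m) (phiT i j q)).

Lemma symchk3 (D : 'I_7 -> 'I_7 -> 'I_7 -> Z) :
  all (fun p => let c := D p ord0 ord0 in
    all (fun m => all (fun q => Z.eqb (Z.add (D p m q) (D p q m)) (Z.mul (bz m q) (Z.add c c))) ord7) ord7) ord7 ->
  forall p m q, Z.add (D p m q) (D p q m) = Z.mul (bz m q) (Z.add (D p ord0 ord0) (D p ord0 ord0)).
Proof.
move=> H p m q; apply: eqbP.
have H1 := allP H p (ord7P p).
have H2 := allP H1 m (ord7P m).
exact: (allP H2 q (ord7P q)).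
Qed.

Lemma symchk4 (D : 'I_7 -> 'I_7 -> 'I_7 -> 'I_7 -> Z) :
  all (fun p => all (fun l => let c := D p l ord0 ord0 in
    all (fun m => all (fun q => Z.eqb (Z.add (D p l m q) (D p l q m)) (Z.mul (bz m q) (Z.add c c))) ord7) ord7) ord7) ord7 ->
  forall p l m q, Z.add (D p l m q) (D p l q m) = Z.mul (bz m q) (Z.add (D p l ord0 ord0) (D p l ord0 ord0)).
Proof.
move=> H p l m q; apply: eqbP.
have H1 := allP H p (ord7P p).
have H2 := allP H1 l (ord7P l).
have H3 := allP H2 m (ord7P m).
exact: (allP H3 q (ord7P q)).
Qed.

Definition A2a (p m q : 'I_7) : Z := s7o (fun a => s7o (fun b => Z.mul (GT p a b m q) (Z.opp (bz b a)))).
Definition A2b (p l m q : 'I_7) : Z := s7o (fun a => s7o (fun b => Z.mul (GT p a b m q) (phiT a b l))).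
Definition B2 (p l m q : 'I_7) : Z := Z.mul (bz m l) (bz q p).
Lemma Cl2a (p m q : 'I_7) :
  Z.add (A2a p m q) (A2a p q m) = Z.mul (bz m q) (Z.add (A2a p ord0 ord0) (A2a p ord0 ord0)).
Proof. by move: p m q; apply: symchk3; vm_cast_no_check (erefl true). Qed.
Lemma Cl2b (p l m q : 'I_7) :
  Z.add (Z.sub (A2b p l m q) (Z.mul (Zpos 4) (B2 p l m q))) (Z.sub (A2b p l q m) (Z.mul (Zpos 4) (B2 p l q m)))
  = Z.mul (bz m q) (Z.add (Z.sub (A2b p l ord0 ord0) (Z.mul (Zpos 4) (B2 p l ord0 ord0)))
                          (Z.sub (A2b p l ord0 ord0) (Z.mul (Zpos 4) (B2 p l ord0 ord0)))).
Proof.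
move: p l m q.
apply: (symchk4 (fun p l m q => Z.sub (A2b p l m q) (Z.mul (Zpos 4) (B2 p l m q)))).
vm_cast_no_check (erefl true).
Qed.

Lemma s7o_ext (F G : 'I_7 -> Z) : (forall i, F i = G i) -> s7o F = s7o G.
Proof. by move=> H; rewrite /s7o /= !H. Qed.

Definition WT (a b c p l : nat) : Z :=
  Z.mul (Zneg 6) (Z.sub (Z.add (Z.sub (Z.mul (bz a l) (phiT b c p)) (Z.mul (bz b l) (phiT a c p)))
     (Z.mul (bz c l) (phiT a b p))) (Z.mul (bz p l) (phiT a b c))).

Lemma M0 (a b c p : 'I_7) :
  s7o (fun i => s7o (fun j => s7o (fun k => Z.mul (eps7l a b c p i j k) (Z.opp (phiT j k i)))))
  = Z.mul (Zneg 6) (psiT a b c p).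
Proof.
have -> : s7o (fun i => s7o (fun j => s7o (fun k => Z.mul (eps7l a b c p i j k) (Z.opp (phiT j k i))))) =
  s7o (fun i => s7o (fun j => s7o (fun k => let y := phiT j k i in
        if Z.eqb y Z0 then Z0 else Z.mul (eps7l a b c p i j k) (Z.opp y)))).
  apply: s7o_ext => i; apply: s7o_ext => j; apply: s7o_ext => k /=.
  by case: (Z.eqb_spec (phiT j k i) Z0) => [->|]; rewrite ?Z.mul_0_r.
by apply: eqbP; move: a b c p; apply: all7_4; vm_cast_no_check (erefl true).
Qed.

Definition YTT (x0 x1 x2 x3 : nat) : Z :=
  match x0, x1, x2, x3 with
  | 0, 0, 0, 0 => Zneg 1
  | 0, 0, 1, 1 => Zneg 1
  | 0, 0, 2, 2 => Zneg 1
  | 0, 0, 3, 3 => Zneg 1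
  | 0, 0, 4, 4 => Zneg 1
  | 0, 0, 5, 5 => Zneg 1
  | 0, 0, 6, 6 => Zneg 1
  | 0, 1, 0, 1 => Zpos 1
  | 0, 1, 1, 0 => Zneg 1
  | 0, 1, 3, 6 => Zpos 1
  | 0, 1, 4, 5 => Zpos 1
  | 0, 1, 5, 4 => Zneg 1
  | 0, 1, 6, 3 => Zneg 1
  | 0, 2, 0, 2 => Zpos 1
  | 0, 2, 2, 0 => Zneg 1
  | 0, 2, 3, 5 => Zpos 1
  | 0, 2, 4, 6 => Zneg 1
  | 0, 2, 5, 3 => Zneg 1
  | 0, 2, 6, 4 => Zpos 1
  | 0, 3, 0, 3 => Zpos 1
  | 0, 3, 1, 6 => Zneg 1
  | 0, 3, 2, 5 => Zneg 1
  | 0, 3, 3, 0 => Zneg 1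
  | 0, 3, 5, 2 => Zpos 1
  | 0, 3, 6, 1 => Zpos 1
  | 0, 4, 0, 4 => Zpos 1
  | 0, 4, 1, 5 => Zneg 1
  | 0, 4, 2, 6 => Zpos 1
  | 0, 4, 4, 0 => Zneg 1
  | 0, 4, 5, 1 => Zpos 1
  | 0, 4, 6, 2 => Zneg 1
  | 0, 5, 0, 5 => Zpos 1
  | 0, 5, 1, 4 => Zpos 1
  | 0, 5, 2, 3 => Zpos 1
  | 0, 5, 3, 2 => Zneg 1
  | 0, 5, 4, 1 => Zneg 1
  | 0, 5, 5, 0 => Zneg 1
  | 0, 6, 0, 6 => Zpos 1
  | 0, 6, 1, 3 => Zpos 1
  | 0, 6, 2, 4 => Zneg 1
  | 0, 6, 3, 1 => Zneg 1
  | 0, 6, 4, 2 => Zpos 1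
  | 0, 6, 6, 0 => Zneg 1
  | 1, 0, 0, 1 => Zneg 1
  | 1, 0, 1, 0 => Zpos 1
  | 1, 0, 3, 6 => Zneg 1
  | 1, 0, 4, 5 => Zneg 1
  | 1, 0, 5, 4 => Zpos 1
  | 1, 0, 6, 3 => Zpos 1
  | 1, 1, 0, 0 => Zneg 1
  | 1, 1, 1, 1 => Zneg 1
  | 1, 1, 2, 2 => Zneg 1
  | 1, 1, 3, 3 => Zneg 1
  | 1, 1, 4, 4 => Zneg 1
  | 1, 1, 5, 5 => Zneg 1
  | 1, 1, 6, 6 => Zneg 1
  | 1, 2, 1, 2 => Zpos 1
  | 1, 2, 2, 1 => Zneg 1
  | 1, 2, 3, 4 => Zneg 1
  | 1, 2, 4, 3 => Zpos 1
  | 1, 2, 5, 6 => Zneg 1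
  | 1, 2, 6, 5 => Zpos 1
  | 1, 3, 0, 6 => Zpos 1
  | 1, 3, 1, 3 => Zpos 1
  | 1, 3, 2, 4 => Zpos 1
  | 1, 3, 3, 1 => Zneg 1
  | 1, 3, 4, 2 => Zneg 1
  | 1, 3, 6, 0 => Zneg 1
  | 1, 4, 0, 5 => Zpos 1
  | 1, 4, 1, 4 => Zpos 1
  | 1, 4, 2, 3 => Zneg 1
  | 1, 4, 3, 2 => Zpos 1
  | 1, 4, 4, 1 => Zneg 1
  | 1, 4, 5, 0 => Zneg 1
  | 1, 5, 0, 4 => Zneg 1
  | 1, 5, 1, 5 => Zpos 1
  | 1, 5, 2, 6 => Zpos 1
  | 1, 5, 4, 0 => Zpos 1
  | 1, 5, 5, 1 => Zneg 1
  | 1, 5, 6, 2 => Zneg 1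
  | 1, 6, 0, 3 => Zneg 1
  | 1, 6, 1, 6 => Zpos 1
  | 1, 6, 2, 5 => Zneg 1
  | 1, 6, 3, 0 => Zpos 1
  | 1, 6, 5, 2 => Zpos 1
  | 1, 6, 6, 1 => Zneg 1
  | 2, 0, 0, 2 => Zneg 1
  | 2, 0, 2, 0 => Zpos 1
  | 2, 0, 3, 5 => Zneg 1
  | 2, 0, 4, 6 => Zpos 1
  | 2, 0, 5, 3 => Zpos 1
  | 2, 0, 6, 4 => Zneg 1
  | 2, 1, 1, 2 => Zneg 1
  | 2, 1, 2, 1 => Zpos 1
  | 2, 1, 3, 4 => Zpos 1
  | 2, 1, 4, 3 => Zneg 1
  | 2, 1, 5, 6 => Zpos 1
  | 2, 1, 6, 5 => Zneg 1
  | 2, 2, 0, 0 => Zneg 1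
  | 2, 2, 1, 1 => Zneg 1
  | 2, 2, 2, 2 => Zneg 1
  | 2, 2, 3, 3 => Zneg 1
  | 2, 2, 4, 4 => Zneg 1
  | 2, 2, 5, 5 => Zneg 1
  | 2, 2, 6, 6 => Zneg 1
  | 2, 3, 0, 5 => Zpos 1
  | 2, 3, 1, 4 => Zneg 1
  | 2, 3, 2, 3 => Zpos 1
  | 2, 3, 3, 2 => Zneg 1
  | 2, 3, 4, 1 => Zpos 1
  | 2, 3, 5, 0 => Zneg 1
  | 2, 4, 0, 6 => Zneg 1
  | 2, 4, 1, 3 => Zpos 1
  | 2, 4, 2, 4 => Zpos 1
  | 2, 4, 3, 1 => Zneg 1
  | 2, 4, 4, 2 => Zneg 1
  | 2, 4, 6, 0 => Zpos 1
  | 2, 5, 0, 3 => Zneg 1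
  | 2, 5, 1, 6 => Zneg 1
  | 2, 5, 2, 5 => Zpos 1
  | 2, 5, 3, 0 => Zpos 1
  | 2, 5, 5, 2 => Zneg 1
  | 2, 5, 6, 1 => Zpos 1
  | 2, 6, 0, 4 => Zpos 1
  | 2, 6, 1, 5 => Zpos 1
  | 2, 6, 2, 6 => Zpos 1
  | 2, 6, 4, 0 => Zneg 1
  | 2, 6, 5, 1 => Zneg 1
  | 2, 6, 6, 2 => Zneg 1
  | 3, 0, 0, 3 => Zneg 1
  | 3, 0, 1, 6 => Zpos 1
  | 3, 0, 2, 5 => Zpos 1
  | 3, 0, 3, 0 => Zpos 1
  | 3, 0, 5, 2 => Zneg 1
  | 3, 0, 6, 1 => Zneg 1
  | 3, 1, 0, 6 => Zneg 1
  | 3, 1, 1, 3 => Zneg 1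
  | 3, 1, 2, 4 => Zneg 1
  | 3, 1, 3, 1 => Zpos 1
  | 3, 1, 4, 2 => Zpos 1
  | 3, 1, 6, 0 => Zpos 1
  | 3, 2, 0, 5 => Zneg 1
  | 3, 2, 1, 4 => Zpos 1
  | 3, 2, 2, 3 => Zneg 1
  | 3, 2, 3, 2 => Zpos 1
  | 3, 2, 4, 1 => Zneg 1
  | 3, 2, 5, 0 => Zpos 1
  | 3, 3, 0, 0 => Zneg 1
  | 3, 3, 1, 1 => Zneg 1
  | 3, 3, 2, 2 => Zneg 1
  | 3, 3, 3, 3 => Zneg 1
  | 3, 3, 4, 4 => Zneg 1
  | 3, 3, 5, 5 => Zneg 1
  | 3, 3, 6, 6 => Zneg 1
  | 3, 4, 1, 2 => Zneg 1
  | 3, 4, 2, 1 => Zpos 1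
  | 3, 4, 3, 4 => Zpos 1
  | 3, 4, 4, 3 => Zneg 1
  | 3, 4, 5, 6 => Zneg 1
  | 3, 4, 6, 5 => Zpos 1
  | 3, 5, 0, 2 => Zpos 1
  | 3, 5, 2, 0 => Zneg 1
  | 3, 5, 3, 5 => Zpos 1
  | 3, 5, 4, 6 => Zpos 1
  | 3, 5, 5, 3 => Zneg 1
  | 3, 5, 6, 4 => Zneg 1
  | 3, 6, 0, 1 => Zpos 1
  | 3, 6, 1, 0 => Zneg 1
  | 3, 6, 3, 6 => Zpos 1
  | 3, 6, 4, 5 => Zneg 1
  | 3, 6, 5, 4 => Zpos 1
  | 3, 6, 6, 3 => Zneg 1
  | 4, 0, 0, 4 => Zneg 1
  | 4, 0, 1, 5 => Zpos 1
  | 4, 0, 2, 6 => Zneg 1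
  | 4, 0, 4, 0 => Zpos 1
  | 4, 0, 5, 1 => Zneg 1
  | 4, 0, 6, 2 => Zpos 1
  | 4, 1, 0, 5 => Zneg 1
  | 4, 1, 1, 4 => Zneg 1
  | 4, 1, 2, 3 => Zpos 1
  | 4, 1, 3, 2 => Zneg 1
  | 4, 1, 4, 1 => Zpos 1
  | 4, 1, 5, 0 => Zpos 1
  | 4, 2, 0, 6 => Zpos 1
  | 4, 2, 1, 3 => Zneg 1
  | 4, 2, 2, 4 => Zneg 1
  | 4, 2, 3, 1 => Zpos 1
  | 4, 2, 4, 2 => Zpos 1
  | 4, 2, 6, 0 => Zneg 1
  | 4, 3, 1, 2 => Zpos 1
  | 4, 3, 2, 1 => Zneg 1
  | 4, 3, 3, 4 => Zneg 1
  | 4, 3, 4, 3 => Zpos 1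
  | 4, 3, 5, 6 => Zpos 1
  | 4, 3, 6, 5 => Zneg 1
  | 4, 4, 0, 0 => Zneg 1
  | 4, 4, 1, 1 => Zneg 1
  | 4, 4, 2, 2 => Zneg 1
  | 4, 4, 3, 3 => Zneg 1
  | 4, 4, 4, 4 => Zneg 1
  | 4, 4, 5, 5 => Zneg 1
  | 4, 4, 6, 6 => Zneg 1
  | 4, 5, 0, 1 => Zpos 1
  | 4, 5, 1, 0 => Zneg 1
  | 4, 5, 3, 6 => Zneg 1
  | 4, 5, 4, 5 => Zpos 1
  | 4, 5, 5, 4 => Zneg 1
  | 4, 5, 6, 3 => Zpos 1
  | 4, 6, 0, 2 => Zneg 1
  | 4, 6, 2, 0 => Zpos 1
  | 4, 6, 3, 5 => Zpos 1
  | 4, 6, 4, 6 => Zpos 1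
  | 4, 6, 5, 3 => Zneg 1
  | 4, 6, 6, 4 => Zneg 1
  | 5, 0, 0, 5 => Zneg 1
  | 5, 0, 1, 4 => Zneg 1
  | 5, 0, 2, 3 => Zneg 1
  | 5, 0, 3, 2 => Zpos 1
  | 5, 0, 4, 1 => Zpos 1
  | 5, 0, 5, 0 => Zpos 1
  | 5, 1, 0, 4 => Zpos 1
  | 5, 1, 1, 5 => Zneg 1
  | 5, 1, 2, 6 => Zneg 1
  | 5, 1, 4, 0 => Zneg 1
  | 5, 1, 5, 1 => Zpos 1
  | 5, 1, 6, 2 => Zpos 1
  | 5, 2, 0, 3 => Zpos 1
  | 5, 2, 1, 6 => Zpos 1
  | 5, 2, 2, 5 => Zneg 1
  | 5, 2, 3, 0 => Zneg 1
  | 5, 2, 5, 2 => Zpos 1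
  | 5, 2, 6, 1 => Zneg 1
  | 5, 3, 0, 2 => Zneg 1
  | 5, 3, 2, 0 => Zpos 1
  | 5, 3, 3, 5 => Zneg 1
  | 5, 3, 4, 6 => Zneg 1
  | 5, 3, 5, 3 => Zpos 1
  | 5, 3, 6, 4 => Zpos 1
  | 5, 4, 0, 1 => Zneg 1
  | 5, 4, 1, 0 => Zpos 1
  | 5, 4, 3, 6 => Zpos 1
  | 5, 4, 4, 5 => Zneg 1
  | 5, 4, 5, 4 => Zpos 1
  | 5, 4, 6, 3 => Zneg 1
  | 5, 5, 0, 0 => Zneg 1
  | 5, 5, 1, 1 => Zneg 1
  | 5, 5, 2, 2 => Zneg 1
  | 5, 5, 3, 3 => Zneg 1
  | 5, 5, 4, 4 => Zneg 1
  | 5, 5, 5, 5 => Zneg 1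
  | 5, 5, 6, 6 => Zneg 1
  | 5, 6, 1, 2 => Zneg 1
  | 5, 6, 2, 1 => Zpos 1
  | 5, 6, 3, 4 => Zneg 1
  | 5, 6, 4, 3 => Zpos 1
  | 5, 6, 5, 6 => Zpos 1
  | 5, 6, 6, 5 => Zneg 1
  | 6, 0, 0, 6 => Zneg 1
  | 6, 0, 1, 3 => Zneg 1
  | 6, 0, 2, 4 => Zpos 1
  | 6, 0, 3, 1 => Zpos 1
  | 6, 0, 4, 2 => Zneg 1
  | 6, 0, 6, 0 => Zpos 1
  | 6, 1, 0, 3 => Zpos 1
  | 6, 1, 1, 6 => Zneg 1
  | 6, 1, 2, 5 => Zpos 1
  | 6, 1, 3, 0 => Zneg 1
  | 6, 1, 5, 2 => Zneg 1
  | 6, 1, 6, 1 => Zpos 1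
  | 6, 2, 0, 4 => Zneg 1
  | 6, 2, 1, 5 => Zneg 1
  | 6, 2, 2, 6 => Zneg 1
  | 6, 2, 4, 0 => Zpos 1
  | 6, 2, 5, 1 => Zpos 1
  | 6, 2, 6, 2 => Zpos 1
  | 6, 3, 0, 1 => Zneg 1
  | 6, 3, 1, 0 => Zpos 1
  | 6, 3, 3, 6 => Zneg 1
  | 6, 3, 4, 5 => Zpos 1
  | 6, 3, 5, 4 => Zneg 1
  | 6, 3, 6, 3 => Zpos 1
  | 6, 4, 0, 2 => Zpos 1
  | 6, 4, 2, 0 => Zneg 1
  | 6, 4, 3, 5 => Zneg 1
  | 6, 4, 4, 6 => Zneg 1
  | 6, 4, 5, 3 => Zpos 1
  | 6, 4, 6, 4 => Zpos 1
  | 6, 5, 1, 2 => Zpos 1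
  | 6, 5, 2, 1 => Zneg 1
  | 6, 5, 3, 4 => Zpos 1
  | 6, 5, 4, 3 => Zneg 1
  | 6, 5, 5, 6 => Zneg 1
  | 6, 5, 6, 5 => Zpos 1
  | 6, 6, 0, 0 => Zneg 1
  | 6, 6, 1, 1 => Zneg 1
  | 6, 6, 2, 2 => Zneg 1
  | 6, 6, 3, 3 => Zneg 1
  | 6, 6, 4, 4 => Zneg 1
  | 6, 6, 5, 5 => Zneg 1
  | 6, 6, 6, 6 => Zneg 1
  | _, _, _, _ => Z0
  end.


Lemma C_YT (i j k l : 'I_7) : YT i j k l = YTT i j k l.
Proof. by apply: eqbP; move: i j k l; apply: all7_4; vm_cast_no_check (erefl true). Qed.

Lemma M1 (a b c p l : 'I_7) :
  s7o (fun i => s7o (fun j => s7o (fun k => Z.mul (eps7l a b c p i j k) (YT i j k l)))) = WT a b c p l.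
Proof.
have -> : s7o (fun i => s7o (fun j => s7o (fun k => Z.mul (eps7l a b c p i j k) (YT i j k l)))) =
  s7o (fun i => s7o (fun j => s7o (fun k => let y := YTT i j k l in
        if Z.eqb y Z0 then Z0 else Z.mul (eps7l a b c p i j k) y))).
  apply: s7o_ext => i; apply: s7o_ext => j; apply: s7o_ext => k /=.
  by rewrite C_YT; case: (Z.eqb_spec (YTT i j k l) Z0) => [->|]; rewrite ?Z.mul_0_r.
by apply: eqbP; move: a b c p l; apply: all7_5; vm_cast_no_check (erefl true).
Qed.

Definition A3a (p m q : 'I_7) : Z :=
  s7o (fun a => s7o (fun b => s7o (fun c => Z.mul (GT a b c m q) (Z.mul (Zneg 6) (psiT a b c p))))).
Definition A3b (p l m q : 'I_7) : Z :=
  s7o (fun a => s7o (fun b => s7o (fun c => Z.mul (GT a b c m q) (WT a b c p l)))).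
Definition A3aL (p m q : 'I_7) : Z :=
  s7o (fun a => s7o (fun b => s7o (fun c => let g := GT a b c m q in
     if Z.eqb g Z0 then Z0 else Z.mul g (Z.mul (Zneg 6) (psiT a b c p))))).
Definition A3bL (p l m q : 'I_7) : Z :=
  s7o (fun a => s7o (fun b => s7o (fun c => let g := GT a b c m q in
     if Z.eqb g Z0 then Z0 else Z.mul g (WT a b c p l)))).
Lemma A3aE p m q : A3a p m q = A3aL p m q.
Proof.
apply: s7o_ext => a; apply: s7o_ext => b; apply: s7o_ext => c /=.
by case: (Z.eqb_spec (GT a b c m q) Z0) => [->|].
Qed.
Lemma A3bE p l m q : A3b p l m q = A3bL p l m q.
Proof.
apply: s7o_ext => a; apply: s7o_ext => b; apply: s7o_ext => c /=.
by case: (Z.eqb_spec (GT a b c m q) Z0) => [->|].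
Qed.
Lemma Cl3a (p m q : 'I_7) :
  Z.add (A3a p m q) (A3a p q m) = Z.mul (bz m q) (Z.add (A3a p ord0 ord0) (A3a p ord0 ord0)).
Proof. by rewrite !A3aE; move: p m q; apply: symchk3; vm_cast_no_check (erefl true). Qed.
Lemma Cl3b (p l m q : 'I_7) :
  Z.add (Z.sub (A3b p l m q) (Z.mul (Zneg 72) (B2 p l m q))) (Z.sub (A3b p l q m) (Z.mul (Zneg 72) (B2 p l q m)))
  = Z.mul (bz m q) (Z.add (Z.sub (A3b p l ord0 ord0) (Z.mul (Zneg 72) (B2 p l ord0 ord0)))
                          (Z.sub (A3b p l ord0 ord0) (Z.mul (Zneg 72) (B2 p l ord0 ord0)))).
Proof.
rewrite !A3bE; move: p l m q.
apply: (symchk4 (fun p l m q => Z.sub (A3bL p l m q) (Z.mul (Zneg 72) (B2 p l m q)))).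
vm_cast_no_check (erefl true).
Qed.

Section RS.
Variable R : realFieldType.
Local Notation z x := ((int_of_Z x)%:~R : R).

Lemma zD x y : z (Z.add x y) = z x + z y.
Proof. by rewrite -intrD; congr intmul; exact: (rmorphD int_of_Z x y). Qed.
Lemma zN x : z (Z.opp x) = - z x.
Proof. by rewrite -mulrNz; congr intmul; exact: (rmorphN int_of_Z x). Qed.
Lemma zB x y : z (Z.sub x y) = z x - z y.
Proof. by rewrite -intrB; congr intmul; exact: (rmorphB int_of_Z x y). Qed.
Lemma zM x y : z (Z.mul x y) = z x * z y.
Proof. by rewrite -intrM; congr intmul; exact: (rmorphM int_of_Z x y). Qed.
Lemma z0 : z Z0 = 0.
Proof. by []. Qed.

Lemma bzE (x y : 'I_7) : z (bz x y) = (x == y)%:R.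
Proof. by change (z (bz x y) = (nat_of_ord x == nat_of_ord y)%:R); rewrite /bz; case: eqP. Qed.

Lemma delta3E (i j k a b c : 'I_7) : @delta3 R i j k a b c = z (d3N i j k a b c).
Proof.
rewrite /delta3 (expand_det_row _ 0) !big_ord_recl big_ord0 /cofactor.
rewrite !(expand_det_row _ 0) !big_ord_recl !big_ord0 /cofactor !det_mx11 !mxE /=.
rewrite !(tnth_nth i) /= /d3N !(zD, zM, zB, bzE).
ring.
Qed.


Lemma phiE (i j k : 'I_7) : @phi R i j k = z (phiN i j k).
Proof.
rewrite /phi !delta3E !vo //.
by rewrite /phiN !(zD, zB).
Qed.

Lemma eps7E (a b c d e f g : 'I_7) :
  @eps7 R a b c d e f g = z (epsZZ [:: (a : nat); (b : nat); (c : nat); (d : nat); (e : nat); (f : nat); (g : nat)]).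
Proof.
rewrite /eps7 (@det_sel R 7 (tnth [tuple a; b; c; d; e; f; g])).
by rewrite (map_comp val (tnth _)) map_tnth_enum /epsZ /epsZZ epsFE.
Qed.

Lemma sumd (i : 'I_7) (f : 'I_7 -> R) : \sum_a (i == a)%:R * f a = f i.
Proof.
rewrite (bigD1 i) //= eqxx mul1r big1 ?addr0 // => a.
by rewrite eq_sym => /negbTE ->; rewrite mul0r.
Qed.
Lemma sumd' (i : 'I_7) (f : 'I_7 -> R) : \sum_a f a * (i == a)%:R = f i.
Proof. by rewrite -[RHS](sumd i); apply: eq_bigr => a _; rewrite mulrC. Qed.

Lemma fst_sum (I : finType) (F : I -> spinor R) : (sp_sum F).1 = \sum_i (F i).1.
Proof. by rewrite /sp_sum (big_morph fst (id1 := 0) (op1 := +%R)). Qed.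
Lemma snd_sum (I : finType) (F : I -> spinor R) l : (sp_sum F).2 l = \sum_i (F i).2 l.
Proof. by rewrite /sp_sum (big_morph (fun s : spinor R => s.2 l) (id1 := 0) (op1 := +%R)). Qed.

Lemma cross0 (Y : vec R) l : cross Y (fun _ => 0) l = 0.
Proof. by rewrite /cross big1 // => i _; rewrite big1 // => j _; rewrite mulr0. Qed.

Lemma cross_e (i : 'I_7) (v : vec R) l : cross (ebasis R i) v l = \sum_b phi R i b l * v b.
Proof.
rewrite /cross /ebasis exchange_big /=; apply: eq_bigr => b _.
rewrite -(sumd i (fun a => phi R a b l * v b)); apply: eq_bigr => a _.
by rewrite mulrCA mulrA.
Qed.

Lemma phiE' (i j k : 'I_7) : phi R i j k = z (phiT i j k).
Proof. by rewrite phiE C_phi. Qed.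

Lemma sumo (F : 'I_7 -> Z) : \sum_(i < 7) z (F i) = z (s7o F).
Proof.
have -> : \sum_(i < 7) z (F i) = \sum_(i <- ord7) z (F i).
  rewrite -big_enum /=; congr bigop.
  by apply: (@inj_map _ _ val val_inj); rewrite val_enum_ord.
by rewrite /s7o /ord7 !big_cons big_nil /= !zD z0.
Qed.

Lemma sp_ext (s t : spinor R) : s.1 = t.1 -> (forall l, s.2 l = t.2 l) -> s = t.
Proof. by case: s t => [a f] [b g] /= -> H; congr pair; apply: functional_extensionality. Qed.

Lemma cliff_e0 k : cliff (ebasis R k) (zeta R) = (0, ebasis R k).
Proof.
apply: sp_ext => [|l] /=; first by rewrite /inner big1 ?oppr0 // => i _; rewrite mulr0.
by rewrite mul1r cross0 addr0.
Qed.

Lemma cliff_e1 j k : cliff (ebasis R j) (0, ebasis R k) = (- (k == j)%:R, fun l => phi R j k l).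
Proof.
apply: sp_ext => [|l] /=; first by rewrite /inner /ebasis sumd.
by rewrite mul0r add0r cross_e /ebasis sumd'.
Qed.

Lemma cliff_e2 i c (v : vec R) :
  cliff (ebasis R i) (c, v) = (- v i, fun l => c * (i == l)%:R + \sum_b phi R i b l * v b).
Proof.
apply: sp_ext => [|l] /=; first by rewrite /inner /ebasis sumd.
by rewrite cross_e.
Qed.

Lemma cliff_ee i j : cliff (ebasis R i) (cliff (ebasis R j) (zeta R)) =
  (- (j == i)%:R, fun l => phi R i j l).
Proof. by rewrite cliff_e0 cliff_e1. Qed.

Lemma cliff_eee i j k : cliff (ebasis R i) (cliff (ebasis R j) (cliff (ebasis R k) (zeta R))) =
  (- phi R j k i, fun l => - (k == j)%:R * (i == l)%:R + \sum_b phi R i b l * phi R j k b).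
Proof. by rewrite cliff_e0 cliff_e1 cliff_e2. Qed.

Lemma cliff2_zeta (eps : 'I_7 -> 'I_7 -> R) :
  cliff2 eps (zeta R) =
  (\sum_i \sum_j eps i j / 2%:R * z (- bz j i),
   fun l : 'I_7 => \sum_i \sum_j eps i j / 2%:R * z (phiT i j l)).
Proof.
rewrite /cliff2.
apply: sp_ext => [|l]; rewrite ?fst_sum ?snd_sum; apply: eq_bigr => i _;
  rewrite ?fst_sum ?snd_sum; apply: eq_bigr => j _; rewrite cliff_ee /=.
  by rewrite zN bzE.
by rewrite phiE'.
Qed.

Lemma cliff3_zeta (eps : 'I_7 -> 'I_7 -> 'I_7 -> R) :
  cliff3 eps (zeta R) =
  (\sum_i \sum_j \sum_k eps i j k / 6%:R * z (- phiT j k i),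
   fun l : 'I_7 => \sum_i \sum_j \sum_k eps i j k / 6%:R * z (YT i j k l)).
Proof.
rewrite /cliff3.
apply: sp_ext => [|l]; rewrite ?fst_sum ?snd_sum; apply: eq_bigr => i _;
  rewrite ?fst_sum ?snd_sum; apply: eq_bigr => j _;
  rewrite ?fst_sum ?snd_sum; apply: eq_bigr => k _; rewrite cliff_eee /=.
  by rewrite zN phiE'.
rewrite /YT zD zN zM !bzE -sumo mulNr; congr (_ * (_ + _)).
by apply: eq_bigr => b _; rewrite zM !phiE'.
Qed.

Lemma sumd2 (i : 'I_7) (f : 'I_7 -> R) : \sum_a f a * (a == i)%:R = f i.
Proof. by rewrite -[RHS](sumd' i); apply: eq_bigr => a _; rewrite eq_sym. Qed.

Lemma sumd3 (i : 'I_7) (f g : 'I_7 -> R) : \sum_a f a * ((i == a)%:R * g a) = f i * g i.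
Proof. by rewrite -(sumd i (fun a => f a * g a)); apply: eq_bigr => a _; rewrite mulrCA. Qed.

Lemma gammaE (h : 'I_7 -> 'I_7 -> R) i j k :
  gamma_of h i j k = \sum_m \sum_q h m q * z (GT i j k m q).
Proof.
rewrite /gamma_of exchange_big /=; apply: eq_bigr => q _.
rewrite /GT; under eq_bigr => m _ do rewrite !zD !zM !bzE !mulrDr -!phiE'.
rewrite !big_split /=.
by rewrite !sumd3.
Qed.

Lemma happE (h : 'I_7 -> 'I_7 -> R) (X : vec R) l :
  happ h X l = \sum_p X p * (\sum_m \sum_q h m q * z (bz m l * bz q p)).
Proof.
rewrite /happ; apply: eq_bigr => p _.
under eq_bigr => m _ do under eq_bigr => q _ do rewrite zM !bzE mulrA.
under eq_bigr => m _ do rewrite sumd2.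
by rewrite sumd2 mulrC.
Qed.

Lemma cliff_zeta (Y : vec R) : cliff Y (zeta R) = (0, Y).
Proof.
apply: sp_ext => [|l] /=; first by rewrite /inner big1 ?oppr0 // => i _; rewrite mulr0.
by rewrite mul1r cross0 addr0.
Qed.

Lemma ExX2 (X : vec R) (F : 'I_7 -> 'I_7 -> 'I_7 -> R) (C : 'I_7 -> 'I_7 -> R) d :
  \sum_i \sum_j (\sum_p X p * F p i j) / d * C i j
  = \sum_p X p * ((\sum_i \sum_j F p i j * C i j) / d).
Proof.
under eq_bigr => i _ do under eq_bigr => j _ do rewrite !mulr_suml.
under eq_bigr => i _ do rewrite exchange_big.
rewrite exchange_big; apply: eq_bigr => p _.
rewrite mulr_suml mulr_sumr; apply: eq_bigr => i _.
rewrite mulr_suml mulr_sumr; apply: eq_bigr => j _.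
by rewrite mulrAC -!mulrA.
Qed.

Lemma ex13 (F : 'I_7 -> 'I_7 -> 'I_7 -> 'I_7 -> R) :
  \sum_i \sum_a \sum_b \sum_c F i a b c = \sum_a \sum_b \sum_c \sum_i F i a b c.
Proof.
rewrite exchange_big; apply: eq_bigr => a _.
rewrite exchange_big; apply: eq_bigr => b _.
by rewrite exchange_big.
Qed.

Lemma ex12 (F : 'I_7 -> 'I_7 -> 'I_7 -> R) :
  \sum_i \sum_a \sum_b F i a b = \sum_a \sum_b \sum_i F i a b.
Proof. by rewrite exchange_big; apply: eq_bigr => a _; rewrite exchange_big. Qed.

Lemma ex33 (F : 'I_7 -> 'I_7 -> 'I_7 -> 'I_7 -> 'I_7 -> 'I_7 -> R) :
  \sum_i \sum_j \sum_k \sum_a \sum_b \sum_c F i j k a b c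
  = \sum_a \sum_b \sum_c \sum_i \sum_j \sum_k F i j k a b c.
Proof.
under eq_bigr => i _ do under eq_bigr => j _ do rewrite ex13.
under eq_bigr => i _ do rewrite ex13.
by rewrite ex13.
Qed.

Lemma ex32 (F : 'I_7 -> 'I_7 -> 'I_7 -> 'I_7 -> 'I_7 -> R) :
  \sum_a \sum_b \sum_c \sum_m \sum_q F a b c m q
  = \sum_m \sum_q \sum_a \sum_b \sum_c F a b c m q.
Proof.
rewrite -(ex13 (fun m a b c => \sum_q F a b c m q)); apply: eq_bigr => m _.
by rewrite -(ex13 (fun q a b c => F a b c m q)).
Qed.

Lemma ex22 (F : 'I_7 -> 'I_7 -> 'I_7 -> 'I_7 -> R) :
  \sum_a \sum_b \sum_m \sum_q F a b m q = \sum_m \sum_q \sum_a \sum_b F a b m q.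
Proof.
rewrite -(ex12 (fun m a b => \sum_q F a b m q)); apply: eq_bigr => m _.
by rewrite -(ex12 (fun q a b => F a b m q)).
Qed.

Lemma ExX3 (X : vec R) (F : 'I_7 -> 'I_7 -> 'I_7 -> 'I_7 -> R) (C : 'I_7 -> 'I_7 -> 'I_7 -> R) d :
  \sum_i \sum_j \sum_k (\sum_p X p * F p i j k) / d * C i j k
  = \sum_p X p * ((\sum_i \sum_j \sum_k F p i j k * C i j k) / d).
Proof.
under eq_bigr => i _ do under eq_bigr => j _ do under eq_bigr => k _ do rewrite !mulr_suml.
rewrite -ex13; apply: eq_bigr => p _.
rewrite mulr_suml mulr_sumr; apply: eq_bigr => i _.
rewrite mulr_suml mulr_sumr; apply: eq_bigr => j _.
rewrite mulr_suml mulr_sumr; apply: eq_bigr => k _.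
by rewrite mulrAC -!mulrA.
Qed.

Lemma eps7E' (a b c d e f g : 'I_7) : eps7 R a b c d e f g = z (eps7l a b c d e f g).
Proof. exact: eps7E. Qed.

Lemma sum3_mull (F : 'I_7 -> 'I_7 -> 'I_7 -> R) y :
  (\sum_a \sum_b \sum_c F a b c) * y = \sum_a \sum_b \sum_c F a b c * y.
Proof.
rewrite mulr_suml; apply: eq_bigr => a _; rewrite mulr_suml; apply: eq_bigr => b _.
by rewrite mulr_suml.
Qed.

Lemma sum3_divl (F : 'I_7 -> 'I_7 -> 'I_7 -> R) y :
  \sum_a \sum_b \sum_c F a b c * y = (\sum_a \sum_b \sum_c F a b c) * y.
Proof. by rewrite sum3_mull. Qed.

Lemma Hod (g : 'I_7 -> 'I_7 -> 'I_7 -> R) (Y : 'I_7 -> 'I_7 -> 'I_7 -> Z) p :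
  \sum_i \sum_j \sum_k hodge3 g p i j k * z (Y i j k)
  = (\sum_a \sum_b \sum_c g a b c *
       z (s7o (fun i => s7o (fun j => s7o (fun k => eps7l a b c p i j k * Y i j k))))) / 6%:R.
Proof.
rewrite /hodge3.
under eq_bigr => i _ do under eq_bigr => j _ do under eq_bigr => k _ do rewrite mulrAC.
rewrite sum3_divl; congr (_ * _).
under eq_bigr => i _ do under eq_bigr => j _ do under eq_bigr => k _ do rewrite sum3_mull.
rewrite ex33; apply: eq_bigr => a _; apply: eq_bigr => b _; apply: eq_bigr => c _.
rewrite -!sumo !mulr_sumr; apply: eq_bigr => i _.
rewrite -sumo !mulr_sumr; apply: eq_bigr => j _.
rewrite -sumo !mulr_sumr; apply: eq_bigr => k _.
by rewrite zM eps7E' mulrA.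
Qed.

Lemma Gm3 (h : 'I_7 -> 'I_7 -> R) (G : 'I_7 -> 'I_7 -> 'I_7 -> 'I_7 -> 'I_7 -> Z)
  (W : 'I_7 -> 'I_7 -> 'I_7 -> Z) :
  \sum_a \sum_b \sum_c (\sum_m \sum_q h m q * z (G a b c m q)) * z (W a b c)
  = \sum_m \sum_q h m q * z (s7o (fun a => s7o (fun b => s7o (fun c => G a b c m q * W a b c)))).
Proof.
under eq_bigr => a _ do under eq_bigr => b _ do under eq_bigr => c _ do
  (rewrite mulr_suml; under eq_bigr => m _ do rewrite mulr_suml).
rewrite ex32; apply: eq_bigr => m _; apply: eq_bigr => q _.
rewrite -sumo mulr_sumr; apply: eq_bigr => a _.
rewrite -sumo mulr_sumr; apply: eq_bigr => b _.
rewrite -sumo mulr_sumr; apply: eq_bigr => c _.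
by rewrite zM mulrA.
Qed.

Lemma Gm2 (h : 'I_7 -> 'I_7 -> R) (G : 'I_7 -> 'I_7 -> 'I_7 -> 'I_7 -> Z)
  (W : 'I_7 -> 'I_7 -> Z) :
  \sum_a \sum_b (\sum_m \sum_q h m q * z (G a b m q)) * z (W a b)
  = \sum_m \sum_q h m q * z (s7o (fun a => s7o (fun b => G a b m q * W a b))).
Proof.
under eq_bigr => a _ do under eq_bigr => b _ do
  (rewrite mulr_suml; under eq_bigr => m _ do rewrite mulr_suml).
rewrite ex22; apply: eq_bigr => m _; apply: eq_bigr => q _.
rewrite -sumo mulr_sumr; apply: eq_bigr => a _.
rewrite -sumo mulr_sumr; apply: eq_bigr => b _.
by rewrite zM mulrA.
Qed.

Lemma symtr (h : 'I_7 -> 'I_7 -> R) (Hs : symmetric2 h) (Ht : traceless2 h)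
  (A : 'I_7 -> 'I_7 -> Z) :
  (forall m q, Z.add (A m q) (A q m) = Z.mul (bz m q) (Z.add (A ord0 ord0) (A ord0 ord0))) ->
  \sum_m \sum_q h m q * z (A m q) = 0.
Proof.
move=> HA; set S := (X in X = 0).
have E : S = \sum_m \sum_q h m q * z (A q m).
  rewrite /S exchange_big /=; apply: eq_bigr => m _; apply: eq_bigr => q _.
  by rewrite Hs.
have : S *+ 2 = 0.
  rewrite mulr2n {2}E -big_split /=.
  under eq_bigr => m _ do rewrite -big_split /=.
  under eq_bigr => m _ do under eq_bigr => q _ do rewrite -mulrDr -zD HA zM bzE mulrCA.
  under eq_bigr => m _ do rewrite sumd.
  by rewrite -mulr_suml (Ht : \sum_i h i i = 0) mul0r.
by move/eqP; rewrite mulrn_eq0 /= => /eqP.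
Qed.

Lemma Slin (h : 'I_7 -> 'I_7 -> R) (A B : 'I_7 -> 'I_7 -> Z) (c : Z) :
  \sum_m \sum_q h m q * z (Z.sub (A m q) (Z.mul c (B m q)))
  = \sum_m \sum_q h m q * z (A m q) - z c * \sum_m \sum_q h m q * z (B m q).
Proof.
rewrite mulr_sumr -sumrB; apply: eq_bigr => m _.
rewrite mulr_sumr -sumrB; apply: eq_bigr => q _.
by rewrite zB zM mulrBr mulrCA.
Qed.

Lemma Fin (h : 'I_7 -> 'I_7 -> R) (Hs : symmetric2 h) (Ht : traceless2 h)
  (A B : 'I_7 -> 'I_7 -> Z) (c : Z) :
  (forall m q, Z.add (Z.sub (A m q) (Z.mul c (B m q))) (Z.sub (A q m) (Z.mul c (B q m)))
     = Z.mul (bz m q) (Z.add (Z.sub (A ord0 ord0) (Z.mul c (B ord0 ord0))) (Z.sub (A ord0 ord0) (Z.mul c (B ord0 ord0))))) ->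
  \sum_m \sum_q h m q * z (A m q) = z c * \sum_m \sum_q h m q * z (B m q).
Proof.
move=> H; apply/eqP; rewrite -subr_eq0 -Slin.
by apply/eqP; apply: (symtr _ Hs Ht (fun m q => Z.sub (A m q) (Z.mul c (B m q)))).
Qed.
Lemma claim1 (X : vec R) : cliff2 (contr3 X (@phi R)) (zeta R) = sp_scale 3%:R (cliff X (zeta R)).
Proof.
rewrite cliff2_zeta cliff_zeta; apply: sp_ext => [|l] /=.
  rewrite /contr3 (ExX2 X (fun p i j => phi R p i j) (fun i j => z (- bz j i))).
  rewrite big1 ?mulr0 // => p _.
  under eq_bigr => i _ do under eq_bigr => j _ do rewrite phiE' -zM.
  under eq_bigr => i _ do rewrite sumo.
  by rewrite sumo Cl1a mul0r mulr0.
rewrite /contr3 (ExX2 X (fun p i j => phi R p i j) (fun i j => z (phiT i j l))).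
under eq_bigr => p _ do
  (under eq_bigr => i _ do under eq_bigr => j _ do rewrite phiE' -zM;
   under eq_bigr => i _ do rewrite sumo; rewrite sumo Cl1b zM bzE mulrAC mulrA).
by rewrite sumd2; field.
Qed.

Lemma claim2 (h : 'I_7 -> 'I_7 -> R) (Hs : symmetric2 h) (Ht : traceless2 h) (X : vec R) :
  cliff2 (contr3 X (gamma_of h)) (zeta R) = sp_scale 2%:R (cliff (happ h X) (zeta R)).
Proof.
rewrite cliff2_zeta cliff_zeta; apply: sp_ext => [|l] /=.
  rewrite /contr3 (ExX2 X (fun p i j => gamma_of h p i j) (fun i j => z (- bz j i))) mulr0.
  rewrite big1 // => p _.
  under eq_bigr => i _ do under eq_bigr => j _ do rewrite gammaE.
  rewrite (Gm2 h (fun a b m q => GT p a b m q) (fun a b => - bz b a)) /=.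
  by rewrite (symtr _ Hs Ht (A2a p)) ?mul0r ?mulr0 // => m q; exact: Cl2a.
rewrite /contr3 (ExX2 X (fun p i j => gamma_of h p i j) (fun i j => z (phiT i j l))).
rewrite ?mul1r ?cross0 ?addr0 happE mulr_sumr; apply: eq_bigr => p _.
under eq_bigr => i _ do under eq_bigr => j _ do rewrite gammaE.
rewrite (Gm2 h (fun a b m q => GT p a b m q) (fun a b => phiT a b l)) /=.
rewrite (Fin _ Hs Ht (A2b p l) (B2 p l) 4) => [|m q]; last exact: Cl2b.
have E : forall S : R, X p * (4%:~R * S / 2) = 2 * (X p * S) by move=> S; field.
exact: E.
Qed.

Lemma claim3 (h : 'I_7 -> 'I_7 -> R) (Hs : symmetric2 h) (Ht : traceless2 h) (X : vec R) :
  cliff3 (contr4 X (hodge3 (gamma_of h))) (zeta R) = sp_scale (- 2%:R) (cliff (happ h X) (zeta R)).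
Proof.
rewrite cliff3_zeta cliff_zeta; apply: sp_ext => [|l] /=.
  rewrite /contr4 (ExX3 X (fun p i j k => hodge3 (gamma_of h) p i j k) (fun i j k => z (- phiT j k i))) mulr0.
  rewrite big1 // => p _.
  rewrite (Hod (gamma_of h) (fun i j k => - phiT j k i) p) /=.
  under eq_bigr => a _ do under eq_bigr => b _ do under eq_bigr => c _ do rewrite M0 gammaE.
  rewrite (Gm3 h (fun a b c m q => GT a b c m q) (fun a b c => -6 * psiT a b c p)) /=.
  by rewrite (symtr _ Hs Ht (A3a p)) ?mul0r ?mulr0 // => m q; exact: Cl3a.
rewrite /contr4 (ExX3 X (fun p i j k => hodge3 (gamma_of h) p i j k) (fun i j k => z (YT i j k l))).
rewrite ?mul1r ?cross0 ?addr0 happE mulr_sumr; apply: eq_bigr => p _.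
rewrite (Hod (gamma_of h) (fun i j k => YT i j k l) p) /=.
under eq_bigr => a _ do under eq_bigr => b _ do under eq_bigr => c _ do rewrite M1 gammaE.
rewrite (Gm3 h (fun a b c m q => GT a b c m q) (fun a b c => WT a b c p l)) /=.
rewrite (Fin _ Hs Ht (A3b p l) (B2 p l) (-72)) => [|m q]; last exact: Cl3b.
have E : forall S : R, X p * ((-72)%:~R * S / 6%:R / 6%:R) = - 2%:R * (X p * S) by move=> S; field.
exact: E.
Qed.

End RS.

Theorem lemma5p4 (R : realFieldType) :
  (forall X : vec R,
     cliff2 (contr3 X (@phi R)) (zeta R) = sp_scale 3%:R (cliff X (zeta R))) /\
  (forall (h : 'I_7 -> 'I_7 -> R), symmetric2 h -> traceless2 h ->
     forall X : vec R,
       cliff2 (contr3 X (gamma_of h)) (zeta R)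
         = sp_scale 2%:R (cliff (happ h X) (zeta R)) /\
       cliff3 (contr4 X (hodge3 (gamma_of h))) (zeta R)
         = sp_scale (- 2%:R) (cliff (happ h X) (zeta R))).
Proof.
split; first exact: claim1.
move=> h Hs Ht X; split; [exact: claim2 | exact: claim3].
Qed.
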